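(* Let $M\in\mathbb{R}^{N\times N}$ and let $\{1,\dots,N\}=\mathcal S\cup\mathcal S'$ be a partition into disjoint nonempty sets, with block decomposition $M=\begin{bmatrix} M_{\mathcal S} & M_{\mathcal S\mathcal S'}\\ M_{\mathcal S'\mathcal S} & M_{\mathcal S'}\end{bmatrix}$. Then for all integers $k\ge 1$, \[ \big\|[M^k]_{\mathcal S\mathcal S'}\big\|\le k\,\|M\|^{k-1}\,\|M_{\mathcal S\mathcal S'}\|. \]
   Context: $\|\cdot\|$ is the spectral norm; $[X]_{\mathcal S\mathcal S'}$ denotes the submatrix of $X$ with rows indexed by $\mathcal S$ and columns indexed by $\mathcal S'$. *)

(* Defs.v *)
From HB Require Import structures.
From mathcomp Require Import all_boot all_order all_algebra.
From mathcomp Require Import boolp classical_sets reals.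
Set Implicit Arguments. Unset Strict Implicit. Unset Printing Implicit Defensive.
Import Order.TTheory GRing.Theory Num.Theory.
Local Open Scope ring_scope.

Definition vnorm (R : realType) (n : nat) (v : 'cV[R]_n) : R :=
  Num.sqrt (\sum_(i < n) v i 0 ^+ 2).

Definition specnorm (R : realType) (m n : nat) (A : 'M[R]_(m, n)) : R :=
  reals.sup [set vnorm (A *m x) | x in [set x : 'cV[R]_n | vnorm x <= 1]]%classic.

(* [X]_{S S'} : rows indexed by S, columns by S' (in increasing order) *)
Definition subblock (R : Type) (N : nat) (S S' : {set 'I_N}) (X : 'M[R]_N)
  : 'M[R]_(#|S|, #|S'|) :=
  \matrix_(i < #|S|, j < #|S'|) X (enum_val i) (enum_val j).

(* Main.v *)
Require Import Defs.
From HB Require Import structures.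
From mathcomp Require Import all_boot all_order all_algebra.
From mathcomp Require Import reals.
From mathcomp Require Import ring lra.
From mathcomp Require boolp classical_sets.
Set Implicit Arguments. Unset Strict Implicit.
Import Order.TTheory GRing.Theory Num.Theory.
Local Open Scope ring_scope.
Module Aux.
Import boolp classical_sets.
Definition ss (R : realType) (n : nat) (x : 'cV[R]_n) : R := \sum_i x i 0 ^+ 2.

Lemma ss_ge0 (R : realType) n (x : 'cV[R]_n) : 0 <= ss x.
Proof. by apply: sumr_ge0 => i _; exact: sqr_ge0. Qed.

Lemma vnorm_ge0 (R : realType) n (x : 'cV[R]_n) : 0 <= vnorm x.
Proof. exact: sqrtr_ge0. Qed.

Lemma vnorm_sqr (R : realType) n (x : 'cV[R]_n) : vnorm x ^+ 2 = ss x.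
Proof. by rewrite /vnorm sqr_sqrtr // ss_ge0. Qed.

Lemma vnormZ (R : realType) n (a : R) (x : 'cV[R]_n) : vnorm (a *: x) = `|a| * vnorm x.
Proof.
rewrite /vnorm -sqrtr_sqr -sqrtrM ?sqr_ge0 //; congr Num.sqrt.
rewrite big_distrr; apply: eq_bigr => i _; rewrite mxE /=; ring.
Qed.

Lemma sumMr (R : realType) (I : finType) (c : R) (F : I -> R) : c * \sum_j F j = \sum_j c * F j.
Proof. by rewrite big_distrr. Qed.
Lemma sumMl (R : realType) (I : finType) (c : R) (F : I -> R) : (\sum_j F j) * c = \sum_j F j * c.
Proof. by rewrite big_distrl. Qed.
Lemma sumDB (R : realType) (I : finType) (F G H : I -> R) :
  \sum_j F j + \sum_j G j - \sum_j H j = \sum_j (F j + G j - H j).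
Proof. by rewrite sumrB big_split. Qed.
Lemma CS (R : realType) n (a b : 'I_n -> R) :
  (\sum_i a i * b i) ^+ 2 <= (\sum_i a i ^+ 2) * (\sum_i b i ^+ 2).
Proof.
have H : 0 <= \sum_i \sum_j (a i * b j - a j * b i) ^+ 2.
  by apply: sumr_ge0 => i _; apply: sumr_ge0 => j _; exact: sqr_ge0.
have E : \sum_i \sum_j (a i * b j - a j * b i) ^+ 2 =
  (\sum_i a i ^+ 2) * (\sum_j b j ^+ 2) + (\sum_i b i ^+ 2) * (\sum_j a j ^+ 2)
  - 2 * ((\sum_i a i * b i) * (\sum_j a j * b j)).
  rewrite !sumMl sumMr sumDB; apply: eq_bigr => i _.
  rewrite !sumMr sumDB; apply: eq_bigr => j _.
  ring.
rewrite E in H; rewrite expr2; lra.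
Qed.

Lemma sumDD (R : realType) (I : finType) (F G H : I -> R) :
  \sum_j F j + \sum_j G j + \sum_j H j = \sum_j (F j + G j + H j).
Proof. by rewrite !big_split. Qed.

Lemma vnormD (R : realType) n (x y : 'cV[R]_n) : vnorm (x + y) <= vnorm x + vnorm y.
Proof.
have hx := vnorm_ge0 x; have hy := vnorm_ge0 y.
rewrite {1}/vnorm -(ger0_norm (addr_ge0 hx hy)) -sqrtr_sqr ler_sqrt ?sqr_ge0 //.
have -> : \sum_i (x + y) i 0 ^+ 2 = ss x + ss y + 2 * \sum_i x i 0 * y i 0.
  rewrite /ss sumMr sumDD; apply: eq_bigr => i _; rewrite mxE; ring.
have C := CS (fun i => x i 0) (fun i => y i 0).
have C2 : \sum_i x i 0 * y i 0 <= vnorm x * vnorm y.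
  apply: le_trans (ler_norm _) _.
  rewrite -sqrtr_sqr -(ger0_norm (mulr_ge0 hx hy)) -sqrtr_sqr ler_sqrt ?sqr_ge0 //.
  by rewrite exprMn !vnorm_sqr.
rewrite -!vnorm_sqr; nra.
Qed.

Lemma vnorm0 (R : realType) n : vnorm (0 : 'cV[R]_n) = 0.
Proof. by rewrite /vnorm big1 ?sqrtr0 // => i _; rewrite mxE expr0n. Qed.

Lemma vnorm_sum (R : realType) n m (v : 'I_m -> 'cV[R]_n) :
  vnorm (\sum_j v j) <= \sum_j vnorm (v j).
Proof.
apply: (big_ind2 (fun u w => vnorm u <= w)); first by rewrite vnorm0.
  by move=> u1 w1 u2 w2 h1 h2; apply: le_trans (vnormD _ _) (lerD h1 h2).
by [].
Qed.

Lemma coord_le (R : realType) n (x : 'cV[R]_n) i : `|x i 0| <= vnorm x.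
Proof.
rewrite -sqrtr_sqr ler_sqrt ?ss_ge0 //.
rewrite (bigD1 i) //= lerDl; apply: sumr_ge0 => j _; exact: sqr_ge0.
Qed.

Definition cb (R : realType) m n (A : 'M[R]_(m, n)) := \sum_j vnorm (col j A).

Lemma mx_bound (R : realType) m n (A : 'M[R]_(m, n)) x :
  vnorm (A *m x) <= cb A * vnorm x.
Proof.
have -> : A *m x = \sum_j x j 0 *: col j A.
  apply/matrixP => i k; rewrite (ord1 k) !mxE summxE; apply: eq_bigr => j _.
  by rewrite !mxE mulrC.
apply: le_trans (vnorm_sum _) _; rewrite /cb sumMl; apply: ler_sum => j _.
rewrite vnormZ mulrC; apply: ler_wpM2l; first exact: vnorm_ge0.
exact: coord_le.
Qed.

Lemma cb_ge0 (R : realType) m n (A : 'M[R]_(m, n)) : 0 <= cb A.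
Proof. by apply: sumr_ge0 => j _; exact: vnorm_ge0. Qed.
Local Open Scope classical_set_scope.

Lemma sn_hasub (R : realType) m n (A : 'M[R]_(m, n)) :
  has_ubound [set vnorm (A *m x) | x in [set x : 'cV[R]_n | vnorm x <= 1]].
Proof.
exists (cb A) => _ [x hx <-]; apply: le_trans (mx_bound A x) _.
by apply: ler_piMr; [exact: cb_ge0 | exact: hx].
Qed.

Lemma sn_ub (R : realType) m n (A : 'M[R]_(m, n)) x :
  vnorm x <= 1 -> vnorm (A *m x) <= specnorm A.
Proof. by move=> hx; apply: (ub_le_sup (sn_hasub A)); exists x. Qed.

Lemma sn_ge0 (R : realType) m n (A : 'M[R]_(m, n)) : 0 <= specnorm A.
Proof.
have h := sn_ub A (x := 0); rewrite mulmx0 !vnorm0 in h; exact: h ler01.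
Qed.

Lemma sn_op (R : realType) m n (A : 'M[R]_(m, n)) x :
  vnorm (A *m x) <= specnorm A * vnorm x.
Proof.
have [h0|hp] := eqVneq (vnorm x) 0.
  rewrite h0 mulr0; apply: le_trans (mx_bound A x) _; by rewrite h0 mulr0.
have vp : 0 < vnorm x by rewrite lt_def hp vnorm_ge0.
have := sn_ub A (x := (vnorm x)^-1 *: x).
rewrite vnormZ ger0_norm ?invr_ge0 ?vnorm_ge0 // mulVf // lexx => /(_ isT).
by rewrite -scalemxAr vnormZ ger0_norm ?invr_ge0 ?vnorm_ge0 // mulrC ler_pdivrMr.
Qed.

Lemma sn_le (R : realType) m n (A : 'M[R]_(m, n)) c :
  0 <= c -> (forall x, vnorm (A *m x) <= c * vnorm x) -> specnorm A <= c.
Proof.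
move=> c0 h; apply: ge_sup.
  by exists (vnorm (A *m 0)), 0 => //=; rewrite vnorm0 ler01.
move=> _ [x hx <-]; apply: le_trans (h x) _; exact: ler_piMr.
Qed.

Lemma sn_mul (R : realType) m n p (A : 'M[R]_(m, n)) (B : 'M[R]_(n, p)) :
  specnorm (A *m B) <= specnorm A * specnorm B.
Proof.
apply: sn_le; first by rewrite mulr_ge0 ?sn_ge0.
move=> x; rewrite -mulmxA; apply: le_trans (sn_op _ _) _.
rewrite -mulrA; apply: ler_wpM2l; [exact: sn_ge0 | exact: sn_op].
Qed.

Lemma sn_add (R : realType) m n (A B : 'M[R]_(m, n)) :
  specnorm (A + B) <= specnorm A + specnorm B.
Proof.
apply: sn_le; first by rewrite addr_ge0 ?sn_ge0.
move=> x; rewrite mulmxDl mulrDl; apply: le_trans (vnormD _ _) _.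
by apply: lerD; exact: sn_op.
Qed.

Lemma sn_exp (R : realType) n (M : 'M[R]_n) k : specnorm (M ^+ k) <= specnorm M ^+ k.
Proof.
elim: k => [|k IH].
  rewrite !expr0; apply: sn_le => // x; by rewrite mul1r -idmxE mul1mx.
rewrite !exprSr; apply: le_trans (sn_mul _ _) _.
by apply: ler_wpM2r; [exact: sn_ge0 | exact: IH].
Qed.
Definition emb (R : realType) N (T : {set 'I_N}) : 'M[R]_(N, #|T|) :=
  \matrix_(j, i) ((j == enum_val i)%:R).

Lemma embE (R : realType) N (T : {set 'I_N}) j i : emb R T j i = (j == enum_val i)%:R.
Proof. by rewrite mxE. Qed.

Lemma sum_delta (R : realType) N (a : 'I_N) (F : 'I_N -> R) :
  \sum_k (k == a)%:R * F k = F a.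
Proof.
rewrite (bigD1 a) //= eqxx mul1r big1 ?addr0 // => k /negbTE ->; exact: mul0r.
Qed.

Lemma subblockE (R : realType) N (T T' : {set 'I_N}) (X : 'M[R]_N) :
  subblock T T' X = (emb R T)^T *m X *m emb R T'.
Proof.
apply/matrixP => i j; rewrite !(mxE, embE).
under eq_bigr => l _ do rewrite !(mxE, embE) mulrC.
rewrite sum_delta.
under eq_bigr => k _ do rewrite !(mxE, embE).
by rewrite sum_delta.
Qed.

Lemma embTK (R : realType) N (T : {set 'I_N}) : (emb R T)^T *m emb R T = 1%:M.
Proof.
apply/matrixP => i i'; rewrite !(mxE, embE).
under eq_bigr => k _ do rewrite !(mxE, embE).
by rewrite sum_delta (inj_eq enum_val_inj).
Qed.

Lemma ssE (R : realType) n (x : 'cV[R]_n) : ss x = (x^T *m x) 0 0.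
Proof. by rewrite mxE; apply: eq_bigr => i _; rewrite mxE expr2. Qed.

Lemma vnormE (R : realType) n (x : 'cV[R]_n) : vnorm x = Num.sqrt (ss x).
Proof. by []. Qed.

Lemma vnorm_emb (R : realType) N (T : {set 'I_N}) x : vnorm (emb R T *m x) = vnorm x.
Proof.
by rewrite !vnormE !ssE trmx_mul -mulmxA (mulmxA (emb R T)^T) embTK mul1mx.
Qed.

Lemma vnorm_embT (R : realType) N (T : {set 'I_N}) y : vnorm ((emb R T)^T *m y) <= vnorm y.
Proof.
rewrite !vnormE ler_sqrt ?ss_ge0 // /ss.
have -> : \sum_i ((emb R T)^T *m y) i 0 ^+ 2 = \sum_(i < #|T|) y (enum_val i) 0 ^+ 2.
  apply: eq_bigr => i _; rewrite !(mxE, embE); congr (_ ^+ 2).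
  under eq_bigr => k _ do rewrite !(mxE, embE).
  exact: sum_delta.
rewrite -(big_enum_val (fun j => y j 0 ^+ 2)) /=.
rewrite [X in _ <= X](bigID (fun j => j \in T)) /= lerDl.
by apply: sumr_ge0 => j _; exact: sqr_ge0.
Qed.

Lemma sn_emb (R : realType) N (T : {set 'I_N}) : specnorm (emb R T) <= 1.
Proof. by apply: sn_le => // x; rewrite vnorm_emb mul1r. Qed.

Lemma sn_embT (R : realType) N (T : {set 'I_N}) : specnorm (emb R T)^T <= 1.
Proof. by apply: sn_le => // x; rewrite mul1r vnorm_embT. Qed.

Lemma proj_sum (R : realType) N (S : {set 'I_N}) :
  emb R S *m (emb R S)^T + emb R (~: S) *m (emb R (~: S))^T = 1%:M.
Proof.
apply/matrixP => j j'; rewrite !(mxE, embE).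
have H : forall T : {set 'I_N}, \sum_i emb R T j i * (emb R T)^T i j' =
    \sum_(x in T) (x == j)%:R * (j' == x)%:R.
  move=> T; rewrite (big_enum_val (fun x => (x == j)%:R * (j' == x)%:R)).
  by apply: eq_bigr => i _; rewrite !(mxE, embE) eq_sym.
rewrite !H; transitivity (\sum_x (x == j)%:R * (j' == x)%:R : R).
  rewrite [in RHS](bigID (fun x => x \in S)) /=; congr (_ + _).
  by apply: eq_bigl => x; rewrite finset.in_setC.
by rewrite sum_delta eq_sym.
Qed.
End Aux.
Import Aux.
Lemma sn_sandwich (R : realType) m n p q (P : 'M[R]_(m, n)) (X : 'M[R]_(n, p)) (Q : 'M[R]_(p, q)) :
  specnorm P <= 1 -> specnorm Q <= 1 -> specnorm (P *m X *m Q) <= specnorm X.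
Proof.
move=> hP hQ; apply: le_trans (sn_mul _ _) _.
have h : specnorm (P *m X) <= specnorm X.
  apply: le_trans (sn_mul _ _) _.
  by rewrite -[leRHS]mul1r; apply: ler_wpM2r; [exact: sn_ge0 | exact: hP].
apply: le_trans _ h; rewrite -[leRHS]mulr1; apply: ler_wpM2l; [exact: sn_ge0 | exact: hQ].
Qed.

Theorem lemma3 (R : realType) (N : nat) (M : 'M[R]_N) (S : {set 'I_N})
  (hS : S != set0) (hS' : ~: S != set0) (k : nat) (hk : (1 <= k)%N) :
  specnorm (subblock S (~: S) (M ^+ k))
    <= k%:R * specnorm M ^+ k.-1 * specnorm (subblock S (~: S) M).
Proof.
rewrite !subblockE.
set A := emb R S; set B := emb R (~: S).
set c := specnorm (A^T *m M *m B); set m := specnorm M.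
have c0 : 0 <= c by exact: sn_ge0.
have m0 : 0 <= m by exact: sn_ge0.
suff claim : forall k, specnorm (A^T *m M ^+ k.+1 *m B) <= k.+1%:R * m ^+ k * c.
  by case: k hk => // k _; exact: claim.
clear hk k; elim=> [|k IH].
  by rewrite expr1 expr0 mulr1 mul1r.
have E : A^T *m (M ^+ k.+2) *m B =
    (A^T *m M ^+ k.+1 *m A) *m (A^T *m M *m B) + (A^T *m M ^+ k.+1 *m B) *m (B^T *m M *m B).
  rewrite exprSr.
  transitivity (A^T *m (M ^+ k.+1 *m (A *m A^T + B *m B^T) *m M) *m B).
    by rewrite proj_sum mulmx1.
  by rewrite !(mulmxDr, mulmxDl, mulmxA).
rewrite E; apply: le_trans (sn_add _ _) _.
have h1 : specnorm (A^T *m M ^+ k.+1 *m A) <= m ^+ k.+1.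
  apply: le_trans (sn_exp _ _); apply: sn_sandwich; [exact: sn_embT | exact: sn_emb].
have h3 : specnorm (B^T *m M *m B) <= m.
  apply: sn_sandwich; [exact: sn_embT | exact: sn_emb].
have t1 : specnorm ((A^T *m M ^+ k.+1 *m A) *m (A^T *m M *m B)) <= m ^+ k.+1 * c.
  exact: le_trans (sn_mul _ _) (ler_wpM2r c0 h1).
have t2 : specnorm ((A^T *m M ^+ k.+1 *m B) *m (B^T *m M *m B)) <= (k.+1%:R * m ^+ k * c) * m.
  exact: le_trans (sn_mul _ _) (ler_pM (sn_ge0 _) (sn_ge0 _) IH h3).
apply: le_trans (lerD t1 t2) _; rewrite le_eqVlt; apply/orP; left; apply/eqP.
have -> : (k.+2)%:R = (k.+1)%:R + 1 :> R by rewrite -natr1.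
rewrite exprS; ring.
Qed.
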